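(* Let $0<\alpha<1$, $t=2^{1-\alpha}$, and let $x\in[0,1]$ be a non-dyadic number with $x\notin\mathcal{S}$. Then there exists $\delta>0$ such that for every $n\ge0$ there exists $J_n\ge n$ with $$\frac{1}{2^{1-\alpha}-1}\,2^{J_n(1-\alpha)}>|C_{J_n-1}(x)|>\delta\, 2^{J_n(1-\alpha)}$$ and either [$C_{J_n-1}(x)>0$ and $i_{J_n+1}(x)=0$] or [$C_{J_n-1}(x)<0$ and $i_{J_n+1}(x)=1$].
   Context: For $x\in[0,1]$ let $i_l(x)\in\{0,1\}$ be its binary digits, $x=\sum_{l\ge1}i_l(x)2^{-l}$. For $n\ge0$, $C_n(x)=\sum_{j=0}^{n}(-1)^{i_{j+1}(x)}2^{(1-\alpha)j}$ (the slope at $x$ of the piecewise affine partial sum $F_n(x)=\sum_{j=0}^n 2^{-\alpha j}\mathrm{dist}(2^jx,\mathbb{Z})$). $\mathcal{S}$ is the set of points of $[0,1]$ of the form $\frac{k}{2^{N}}+\frac{1}{3\cdot 2^{N}}$ or $\frac{k}{2^{N}}+\frac{2}{3\cdot 2^{N}}$ with $k,N\in\mathbb{N}$ (equivalently, points with $i_j(x)+i_{j+1}(x)=1$ for all large $j$). A dyadic number is one of the form $K2^{-N}$ with $K,N\in\mathbb{N}$. *)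

(* Defs.v *)
From Stdlib Require Import Reals Lra Lia ZArith.
Open Scope R_scope.

(* l-th binary digit i_l(x) of x in [0,1]: floor(2^l x) mod 2.
   (For non-dyadic x this is the unique binary expansion.) *)
Definition digit (l : nat) (x : R) : nat :=
  Z.to_nat (Z.modulo (Int_part (x * 2 ^ l)) 2).

Definition Cn (alpha : R) (n : nat) (x : R) : R :=
  sum_f_R0 (fun j => (-1) ^ (digit (S j) x) * Rpower 2 ((1 - alpha) * INR j)) n.

Definition dyadic (x : R) : Prop :=
  exists K N : nat, x = INR K / 2 ^ N.

Definition in_S (x : R) : Prop :=
  0 <= x <= 1 /\
  exists k N : nat,
    x = INR k / 2 ^ N + 1 / (3 * 2 ^ N) \/ x = INR k / 2 ^ N + 2 / (3 * 2 ^ N).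

(* Main.v *)
Require Import Defs.
From Stdlib Require Import Reals Lra Lia ZArith Classical.
Open Scope R_scope.

Lemma digit01 l x : (digit l x = 0 \/ digit l x = 1)%nat.
Proof. unfold digit. pose proof (Z.mod_pos_bound (Int_part (x*2^l)) 2 ltac:(lia)). lia. Qed.

Lemma a_stepR l x : IZR (Int_part (x*2^(S l))) = 2 * IZR (Int_part (x*2^l)) + INR (digit (S l) x).
Proof.
  pose proof (base_Int_part (x*2^l)) as [H1 H2].
  pose proof (base_Int_part (x*2^(S l))) as [H3 H4].
  set (a0 := Int_part (x*2^l)) in *. set (a1 := Int_part (x*2^(S l))) in *.
  assert (E : x * 2^(S l) = 2 * (x*2^l)) by (simpl; ring).
  rewrite E in H3, H4.
  assert (L1 : (-1 < a1 - 2*a0)%Z).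
  { apply lt_IZR. rewrite minus_IZR, mult_IZR. simpl. lra. }
  assert (L2 : (a1 - 2*a0 < 2)%Z).
  { apply lt_IZR. rewrite minus_IZR, mult_IZR. simpl. lra. }
  unfold digit. fold a1.
  assert (a1 = 2*a0 \/ a1 = 2*a0+1)%Z as [e|e] by lia; rewrite e.
  - replace ((2*a0) mod 2)%Z with 0%Z by (rewrite Z.mul_comm, Z_mod_mult; reflexivity).
    rewrite mult_IZR. simpl. lra.
  - replace ((2*a0+1) mod 2)%Z with 1%Z.
    + rewrite plus_IZR, mult_IZR. simpl. lra.
    + rewrite Z.add_comm, Z.mul_comm, Z_mod_plus_full. reflexivity.
Qed.

Lemma INR_lt_pow2 n : INR n < 2^n.
Proof. induction n. simpl; lra. rewrite S_INR. pose proof (pow_R1_Rle 2 n ltac:(lra)). simpl. lra. Qed.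

Lemma squeeze z : (forall k:nat, Rabs z <= / 2^k) -> z = 0.
Proof.
  intros H. destruct (Req_dec z 0) as [|Hz]; auto. exfalso.
  assert (Pz : 0 < Rabs z) by (apply Rabs_pos_lt; auto).
  destruct (archimed (/ Rabs z)) as [A _].
  set (u := up (/ Rabs z)) in *.
  assert (Pu : (0 < u)%Z). { apply lt_IZR. pose proof (Rinv_0_lt_compat _ Pz). simpl; lra. }
  pose proof (INR_lt_pow2 (Z.to_nat u)) as B.
  rewrite INR_IZR_INZ, Z2Nat.id in B by lia.
  specialize (H (Z.to_nat u)).
  set (P := 2 ^ Z.to_nat u) in *.
  assert (0 < P) by (unfold P; apply pow_lt; lra).
  assert (Rabs z * P <= 1).
  { apply Rmult_le_reg_r with (/P). apply Rinv_0_lt_compat; auto.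
    rewrite Rmult_assoc, Rinv_r by lra. lra. }
  assert (/ Rabs z < P) by lra.
  assert (1 < Rabs z * P).
  { replace 1 with (Rabs z * / Rabs z) by (field; lra).
    apply Rmult_lt_compat_l; auto. }
  lra.
Qed.

Lemma pin x L (beta : nat -> R) : (forall l, 0 <= beta l <= 1) ->
  (forall l, (L <= l)%nat -> IZR (Int_part (x*2^(S l))) + beta (S l) = 2 * (IZR (Int_part (x*2^l)) + beta l)) ->
  x = (IZR (Int_part (x*2^L)) + beta L) / 2^L.
Proof.
  intros Hb Hr. set (c := IZR (Int_part (x*2^L)) + beta L).
  assert (Hk : forall k, IZR (Int_part (x*2^(L+k))) + beta (L+k)%nat = 2^k * c).
  { induction k. rewrite Nat.add_0_r. simpl. unfold c; ring.
    rewrite Nat.add_succ_r, Hr by lia. rewrite IHk. simpl. ring. }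
  assert (P : 0 < 2^L) by (apply pow_lt; lra).
  assert (x*2^L - c = 0).
  { apply squeeze. intros k. specialize (Hk k).
    pose proof (base_Int_part (x*2^(L+k))) as [H1 H2]. specialize (Hb (L+k)%nat).
    rewrite pow_add in H1, H2.
    assert (Pk : 0 < 2^k) by (apply pow_lt; lra).
    assert (Rabs (2^k * (x*2^L - c)) <= 1).
    { replace (2^k * (x*2^L - c)) with (x*(2^L*2^k) - (IZR (Int_part (x * (2 ^ L * 2 ^ k))) + beta (L+k)%nat)).
      2: { rewrite pow_add in Hk. rewrite Hk. ring. }
      apply Rabs_le. split; lra. }
    rewrite Rabs_mult, Rabs_right in H by lra.
    apply Rmult_le_reg_l with (2^k); auto. rewrite Rinv_r by lra. lra. }
  field_simplify_eq; lra.
Qed.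

Lemma Int_part_nonneg x L : 0 <= x -> (0 <= Int_part (x*2^L))%Z.
Proof.
  intros Hx. pose proof (base_Int_part (x*2^L)) as [_ H].
  assert (0 <= x*2^L) by (apply Rmult_le_pos; [lra| apply pow_le; lra]).
  assert (-1 < Int_part (x*2^L))%Z by (apply lt_IZR; simpl; lra). lia.
Qed.

Lemma find_m x N : 0 <= x <= 1 -> ~ dyadic x -> ~ in_S x ->
  exists m, (N <= m)%nat /\ digit (S m) x <> digit (S (S m)) x /\
    digit (S (S m)) x = digit (S (S (S m))) x.
Proof.
  intros Hx Hd HS. apply NNPP. intros Hn.
  assert (Hf : forall m, (N <= m)%nat -> digit (S m) x <> digit (S (S m)) x ->
     digit (S (S m)) x <> digit (S (S (S m))) x).
  { intros m Hm H1 H2. apply Hn. exists m. auto. }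
  destruct (classic (exists m0, (N <= m0)%nat /\ digit (S m0) x <> digit (S (S m0)) x)) as [[m0 [Hm0 Hfl]]|Hno].
  - assert (Hall : forall k, digit (S (m0+k)) x <> digit (S (S (m0+k))) x).
    { induction k. rewrite Nat.add_0_r; auto.
      rewrite Nat.add_succ_r. apply Hf; auto. lia. }
    apply HS. split; auto.
    set (beta := fun l => (INR (digit (S l) x) + 1)/3).
    assert (E := pin x m0 beta).
    assert (Hb : forall l, 0 <= beta l <= 1).
    { intros l. unfold beta. destruct (digit01 (S l) x) as [e|e]; rewrite e; simpl; lra. }
    specialize (E Hb).
    assert (Hr : forall l, (m0 <= l)%nat -> IZR (Int_part (x*2^(S l))) + beta (S l) = 2 * (IZR (Int_part (x*2^l)) + beta l)).
    { intros l Hl. rewrite a_stepR. unfold beta.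
      specialize (Hall (l - m0)%nat). replace (m0 + (l - m0))%nat with l in Hall by lia.
      destruct (digit01 (S l) x) as [e|e]; destruct (digit01 (S (S l)) x) as [e'|e'];
        rewrite e, e' in *; try congruence; simpl; lra. }
    specialize (E Hr).
    exists (Z.to_nat (Int_part (x*2^m0))), m0.
    rewrite INR_IZR_INZ, Z2Nat.id by (apply Int_part_nonneg; lra).
    assert (0 < 2^m0) by (apply pow_lt; lra).
    unfold beta in E. destruct (digit01 (S m0) x) as [e|e]; rewrite e in E; simpl in E.
    + left. rewrite E at 1. field. lra.
    + right. rewrite E at 1. field. lra.
  - assert (Hc : forall m, (N <= m)%nat -> digit (S m) x = digit (S (S m)) x).
    { intros m Hm. apply NNPP. intros H. apply Hno. exists m. auto. }
    apply Hd.
    set (beta := fun l => INR (digit (S l) x)).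
    assert (E := pin x N beta).
    assert (Hb : forall l, 0 <= beta l <= 1).
    { intros l. unfold beta. destruct (digit01 (S l) x) as [e|e]; rewrite e; simpl; lra. }
    specialize (E Hb).
    assert (Hr : forall l, (N <= l)%nat -> IZR (Int_part (x*2^(S l))) + beta (S l) = 2 * (IZR (Int_part (x*2^l)) + beta l)).
    { intros l Hl. rewrite a_stepR. unfold beta. rewrite <- (Hc l Hl). ring. }
    specialize (E Hr).
    exists (Z.to_nat (Int_part (x*2^N)) + digit (S N) x)%nat, N.
    rewrite plus_INR, INR_IZR_INZ, Z2Nat.id by (apply Int_part_nonneg; lra).
    exact E.
Qed.

Lemma pw alpha j : Rpower 2 ((1 - alpha) * INR j) = (Rpower 2 (1-alpha))^j.
Proof. rewrite <- Rpower_mult, Rpower_pow; auto. unfold Rpower; apply exp_pos. Qed.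

Lemma Cn_S alpha m x : Cn alpha (S m) x = Cn alpha m x + (-1)^(digit (S (S m)) x) * (Rpower 2 (1-alpha))^(S m).
Proof. rewrite <- pw. reflexivity. Qed.

Lemma Cn_bound alpha x m : 1 < Rpower 2 (1-alpha) ->
  Rabs (Cn alpha m x) <= ((Rpower 2 (1-alpha))^(S m) - 1) / (Rpower 2 (1-alpha) - 1).
Proof.
  intros Ht. set (t := Rpower 2 (1-alpha)) in *. induction m.
  - change (Cn alpha 0 x) with ((-1)^(digit 1 x) * Rpower 2 ((1-alpha)*INR 0)).
    rewrite pw. fold t. rewrite Rabs_mult, pow_1_abs. simpl. replace ((t*1-1)/(t-1)) with 1 by (field; lra). rewrite Rabs_R1. lra.
  - rewrite Cn_S. fold t. eapply Rle_trans. apply Rabs_triang.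
    rewrite Rabs_mult, pow_1_abs, (Rabs_right (t^(S m))) by (apply Rle_ge, pow_le; lra).
    apply Rle_trans with ((t ^ S m - 1) / (t - 1) + t^(S m)). lra.
    right. simpl. field. lra.
Qed.

Theorem mainTheorem3 (alpha x : R) :
  0 < alpha < 1 ->
  0 <= x <= 1 ->
  ~ dyadic x ->
  ~ in_S x ->
  exists delta : R, 0 < delta /\
    forall n : nat, exists J : nat, (n <= J)%nat /\ (1 <= J)%nat /\
      (1 / (Rpower 2 (1 - alpha) - 1)) * Rpower 2 (INR J * (1 - alpha))
        > Rabs (Cn alpha (J - 1)%nat x) /\
      Rabs (Cn alpha (J - 1)%nat x) > delta * Rpower 2 (INR J * (1 - alpha)) /\
      ((Cn alpha (J - 1)%nat x > 0 /\ digit (J + 1)%nat x = 0%nat) \/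
       (Cn alpha (J - 1)%nat x < 0 /\ digit (J + 1)%nat x = 1%nat)).
Proof.
  intros Ha Hx Hd HS.
  assert (Ht1 : 1 < Rpower 2 (1-alpha)).
  { pose proof (Rpower_lt 2 0 (1-alpha) ltac:(lra) ltac:(lra)) as Q. rewrite Rpower_O in Q by lra. exact Q. }
  assert (Pw : forall J, Rpower 2 (INR J * (1 - alpha)) = (Rpower 2 (1-alpha))^J).
  { intros J. rewrite Rmult_comm. apply pw. }
  set (t := Rpower 2 (1-alpha)) in *.
  set (delta := (t-1)/(2*(1+t^2))).
  assert (Pd : 0 < delta).
  { unfold delta. apply Rdiv_lt_0_compat. lra. nra. }
  assert (Kd : t - 1 - delta - delta*t^2 > 0).
  { unfold delta. replace (t - 1 - (t - 1) / (2 * (1 + t ^ 2)) - (t - 1) / (2 * (1 + t ^ 2)) * t ^ 2)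
      with ((t-1)/2) by (field; nra). lra. }
  exists delta. split; auto. intros n.
  assert (Good : forall J, (1 <= J)%nat -> (n <= J)%nat ->
     (-1)^(digit (S J) x) * Cn alpha (J-1) x > delta * t^J ->
     (n <= J)%nat /\ (1 <= J)%nat /\
      (1 / (t - 1)) * Rpower 2 (INR J * (1 - alpha)) > Rabs (Cn alpha (J - 1)%nat x) /\
      Rabs (Cn alpha (J - 1)%nat x) > delta * Rpower 2 (INR J * (1 - alpha)) /\
      ((Cn alpha (J - 1)%nat x > 0 /\ digit (J + 1)%nat x = 0%nat) \/
       (Cn alpha (J - 1)%nat x < 0 /\ digit (J + 1)%nat x = 1%nat))).
  { intros J H1 H2 H3. rewrite Pw. rewrite Nat.add_1_r.
    assert (PJ : 0 < t^J) by (apply pow_lt; lra).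
    split; auto. split; auto. split.
    - pose proof (Cn_bound alpha x (J-1) Ht1) as B. fold t in B.
      replace (S (J-1)) with J in B by lia.
      apply Rle_lt_trans with (1 := B). unfold Rdiv.
      assert (Q : 0 < / (t-1)) by (apply Rinv_0_lt_compat; lra). nra.
    - assert (0 < delta * t^J) by (apply Rmult_lt_0_compat; lra).
      destruct (digit01 (S J) x) as [e|e]; rewrite e in *; simpl in H3.
      + rewrite Rabs_right by lra. split. lra. left; split; auto; lra.
      + rewrite Rabs_left by lra. split. lra. right; split; auto; lra. }
  destruct (find_m x (max n 1) Hx Hd HS) as [m [Hm [D1 D2]]].
  destruct (Rlt_le_dec (delta * t^m) ((-1)^(digit (S m) x) * Cn alpha (m-1) x)) as [A|B].
  - exists m. apply Good; auto; lia.
  - exists (S (S m)). apply Good; try lia.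
    destruct m as [|p]; [lia|].
    replace (S (S (S p)) - 1)%nat with (S (S p)) by lia.
    replace (S p - 1)%nat with p in B by lia.
    rewrite !Cn_S. fold t.
    assert (PT : 0 < t^(S p)) by (apply pow_lt; lra).
    assert (KK : t^(S p) * (t - 1 - delta - delta*t^2) > 0) by (apply Rmult_lt_0_compat; lra).
    replace (t^(S (S (S (S p))))) with (t^(S p) * t^2 * t) in * by (simpl; ring).
    replace (t^(S (S p))) with (t^(S p) * t) by (simpl; ring).
    rewrite <- D2.
    destruct (digit01 (S (S p)) x) as [e|e]; rewrite e in *;
    destruct (digit01 (S (S (S p))) x) as [e'|e']; rewrite e' in *; try congruence;
    simpl in *; nra.
Qed.
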